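(* Let $\alpha_2,\alpha_3\le0$ and $\alpha_1\le\alpha_2^2/4$ be real. Let $\mathbf{x}=(x_s)\in(\mathbb{R}_{>0})^{\mathbb{Z}}$ satisfy, for all $v\in\mathbb{Z}$ (with $z_i=x_{v+i}$), $$z_0^2z_3^2+\alpha_1z_1^2z_2^2+\alpha_2z_0z_1z_2z_3+\alpha_3(z_0z_2^3+z_1^3z_3)=0,$$ and assume moreover that $z_3$ is the larger of the two real solutions of this equation, i.e. $z_3=\dfrac{-\alpha_3z_1^3-\alpha_2z_0z_1z_2+\sqrt D}{2z_0^2}$ with $D=\alpha_3^2z_1^6+2\alpha_2\alpha_3z_0z_1^4z_2+(\alpha_2^2-4\alpha_1)z_0^2z_1^2z_2^2-4\alpha_3z_0^3z_2^3$. Then for all $v\in\mathbb{Z}$, $$2z_0^2z_3+\alpha_2z_0z_1z_2+\alpha_3z_1^3=2z_{-1}z_2^2+\alpha_2z_0z_1z_2+\alpha_3z_1^3,$$ equivalently $z_0^2z_3=z_{-1}z_2^2$. *)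

(* Defs.v *)
From Stdlib Require Export Reals ZArith.
Open Scope R_scope.

Definition rel (a1 a2 a3 z0 z1 z2 z3 : R) : R :=
  z0^2 * z3^2 + a1 * z1^2 * z2^2 + a2 * z0 * z1 * z2 * z3
  + a3 * (z0 * z2^3 + z1^3 * z3).

Definition discr (a1 a2 a3 z0 z1 z2 : R) : R :=
  a3^2 * z1^6 + 2 * a2 * a3 * z0 * z1^4 * z2
  + (a2^2 - 4 * a1) * z0^2 * z1^2 * z2^2 - 4 * a3 * z0^3 * z2^3.

Definition big_root (a1 a2 a3 z0 z1 z2 : R) : R :=
  (- a3 * z1^3 - a2 * z0 * z1 * z2 + sqrt (discr a1 a2 a3 z0 z1 z2)) / (2 * z0^2).

(* Main.v *)
Require Import Defs.
From Stdlib Require Import Reals ZArith Lra Psatz.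
Open Scope R_scope.

Theorem theorem6p3 (a1 a2 a3 : R) (x : Z -> R)
  (ha2 : a2 <= 0) (ha3 : a3 <= 0) (ha1 : a1 <= a2^2 / 4)
  (hpos : forall s : Z, 0 < x s)
  (hrel : forall v : Z,
      rel a1 a2 a3 (x v) (x (v+1)%Z) (x (v+2)%Z) (x (v+3)%Z) = 0)
  (hroot : forall v : Z,
      x (v+3)%Z = big_root a1 a2 a3 (x v) (x (v+1)%Z) (x (v+2)%Z)) :
  forall v : Z,
    2 * (x v)^2 * x (v+3)%Z + a2 * x v * x (v+1)%Z * x (v+2)%Z + a3 * (x (v+1)%Z)^3
    = 2 * x (v-1)%Z * (x (v+2)%Z)^2 + a2 * x v * x (v+1)%Z * x (v+2)%Z
      + a3 * (x (v+1)%Z)^3.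
Proof.
  intro v.
  assert (H1 := hrel (v-1)%Z). assert (H2 := hroot (v-1)%Z).
  assert (H3 := hrel v). assert (H4 := hroot v).
  replace (v-1+1)%Z with v in H1, H2 by lia.
  replace (v-1+2)%Z with (v+1)%Z in H1, H2 by lia.
  replace (v-1+3)%Z with (v+2)%Z in H1, H2 by lia.
  unfold rel in H1, H3. unfold big_root in H2, H4.
  assert (hw := hpos (v-1)%Z). assert (ha := hpos v).
  assert (hb := hpos (v+1)%Z). assert (hc := hpos (v+2)%Z).
  assert (hd := hpos (v+3)%Z).
  set (w := x (v-1)%Z) in *. set (a := x v) in *. set (b := x (v+1)%Z) in *.
  set (c := x (v+2)%Z) in *. set (d := x (v+3)%Z) in *.
  set (D1 := discr a1 a2 a3 w a b) in *.
  set (D2 := discr a1 a2 a3 a b c) in *.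
  assert (S1 := sqrt_pos D1). assert (S2 := sqrt_pos D2).
  assert (G2 : 2*w^2*c + a2*w*a*b + a3*a^3 >= 0).
  { assert (E : 2*w^2*c + a2*w*a*b + a3*a^3 = sqrt D1).
    { rewrite H2. field. lra. }
    lra. }
  assert (G4 : 2*a^2*d + a2*a*b*c + a3*b^3 >= 0).
  { assert (E : 2*a^2*d + a2*a*b*c + a3*b^3 = sqrt D2).
    { rewrite H4. field. lra. }
    lra. }
  clear H2 H4.
  set (q := 2*w*c + a2*a*b).
  assert (Hq0 : 0 <= q).
  { assert (w * q >= - a3 * a^3) by (unfold q; nra).
    assert (0 <= -a3 * a^3) by (apply Rmult_le_pos; [lra| apply pow_le; lra]).
    nra. }
  assert (Hq2 : q^2 >= -4*a3*w*b^3).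
  { assert (q^2 = (a2^2 - 4*a1)*a^2*b^2 - 4*a3*w*b^3 - 4*a3*a^3*c) by (unfold q; nra).
    assert (0 <= (a2^2 - 4*a1)*a^2*b^2) by (apply Rmult_le_pos; [apply Rmult_le_pos|]; nra).
    assert (0 <= -a3*a^3*c) by (apply Rmult_le_pos; [apply Rmult_le_pos|]; try apply pow_le; lra).
    lra. }
  assert (Hqle : q <= 2*w*c).
  { unfold q. assert (0 <= a*b) by nra. nra. }
  assert (Hwc : w*c^2 >= -a3*b^3).
  { assert (4*w^2*c^2 >= q^2) by nra.
    assert (0 <= -a3*b^3) by (apply Rmult_le_pos; [|apply pow_le]; lra).
    nra. }
  assert (G5 : q*c >= -2*a3*b^3).
  { assert (0 <= -a3*b^3) by (apply Rmult_le_pos; [|apply pow_le]; lra).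
    assert ((q*c)^2 >= (-2*a3*b^3)^2) by nra.
    nra. }
  set (P := a^2*d). set (Q := w*c^2).
  set (B := a2*a*b*c + a3*b^3). set (C := a1*b^2*c^2 + a3*a*c^3).
  assert (EP : P^2 + B*P + a^2*C = 0) by (unfold P, B, C; nra).
  assert (EQ : Q^2 + B*Q + a^2*C = 0) by (unfold Q, B, C; nra).
  assert (GP : 2*P + B >= 0) by (unfold P, B; nra).
  assert (GQ : 2*Q + B >= 0) by (unfold Q, B, q in *; nra).
  assert (Hfac : (P - Q) * (P + Q + B) = 0) by nra.
  assert (PQ : P = Q).
  { destruct (Rmult_integral _ _ Hfac) as [h|h]; [lra|]. lra. }
  unfold P, Q in PQ. nra.
Qed.
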